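(* Let $0<\alpha<d$, $1\leq p<d/\alpha$, $f\in L^p(\mathbb{R}^d)$, and $\varepsilon>0$. Then there is a subset $\widetilde{\mathcal{Q}}_\alpha\subset\mathcal{Q}_\alpha$ such that for each $Q\in\mathcal{Q}_\alpha$ with $\ell(Q)^\alpha f_Q>\varepsilon$ there is $P\in\widetilde{\mathcal{Q}}_\alpha$ with $Q\subset\operatorname{prt}(P)$ and $f_Q\leq 2^d f_P$. Furthermore, for any two $Q,P\in\widetilde{\mathcal{Q}}_\alpha$ at least one of the following holds: (1) $\operatorname{prt}(Q)=\operatorname{prt}(P)$; (2) $\operatorname{prt}(Q)\cap\operatorname{prt}(P)=\emptyset$; (3) $f_Q/f_P\notin(2^{-d},2^d)$.
   Context: Dyadic cubes are $[x_1,x_1+2^n)\times\dots\times[x_d,x_d+2^n)$, $n\in\mathbb{Z}$, $x_i\in2^n\mathbb{Z}$; $\ell(Q)$ is the sidelength, $\operatorname{prt}(Q)$ is the dyadic parent of $Q$ (the dyadic cube of sidelength $2\ell(Q)$ containing $Q$), and $f_Q=\frac1{|Q|}\int_Q|f|$. $\mathcal{Q}_\alpha$ is the set of dyadic cubes $Q$ such that $\ell(P)^\alpha f_P<\ell(Q)^\alpha f_Q$ for every dyadic cube $P\supsetneq Q$. *)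

(* Defs.v *)
From HB Require Import structures.
From mathcomp Require Import all_boot all_order all_algebra.
From mathcomp Require Import all_classical all_reals all_analysis.
Set Implicit Arguments. Unset Strict Implicit. Unset Printing Implicit Defensive.
Import Order.TTheory GRing.Theory Num.Theory.
Local Open Scope classical_set_scope.
Local Open Scope ring_scope.

(* Points of R^d are d-tuples of reals (product Borel sigma-algebra). *)

(* A dyadic cube is indexed by its generation n : int (side 2^n) and the
   integer coordinates k (so x_i = k_i 2^n). *)
Definition dyadic (d : nat) : Type := (int * {ffun 'I_d -> int})%type.

Definition side {R : realType} {d : nat} (Q : dyadic d) : R := (2%:R : R) ^ Q.1.

Definition cube {R : realType} {d : nat} (Q : dyadic d) : set (d.-tuple R) :=
  [set x | forall i : 'I_d,
     (Q.2 i)%:~R * side Q <= tnth x i < ((Q.2 i) + 1)%:~R * side Q].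

Definition prt {d : nat} (Q : dyadic d) : dyadic d :=
  (Q.1 + 1, [ffun i => ((Q.2 i) %/ 2)%Z]).

Definition box {R : realType} {d : nat} (a b : d.-tuple R) : set (d.-tuple R) :=
  [set x | forall i : 'I_d, tnth a i <= tnth x i < tnth b i].

(* mu is Lebesgue measure on R^d: it gives every box its volume.  On the
   (product Borel) sigma-algebra this determines mu uniquely. *)
Definition is_lebesgue {R : realType} {d : nat}
  (mu : {measure set (d.-tuple R) -> \bar R}) : Prop :=
  forall a b : d.-tuple R, (forall i, tnth a i <= tnth b i) ->
    mu (box a b) = (\prod_(i < d) (tnth b i - tnth a i))%:E.

Definition avg {R : realType} {d : nat}
  (mu : {measure set (d.-tuple R) -> \bar R}) (f : d.-tuple R -> R)
  (Q : dyadic d) : R :=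
  fine (\int[mu]_(x in cube Q) (`|f x|)%:E)%E / fine (mu (cube Q)).

Definition Qalpha {R : realType} {d : nat}
  (mu : {measure set (d.-tuple R) -> \bar R}) (f : d.-tuple R -> R)
  (alpha : R) : set (dyadic d) :=
  [set Q | forall P : dyadic d,
     @cube R d Q `<=` cube P -> cube P <> cube Q :> set (d.-tuple R) ->
     side P `^ alpha * avg mu f P < side Q `^ alpha * avg mu f Q].

(* Main.v *)
Require Import Defs.
From HB Require Import structures.
From mathcomp Require Import all_boot all_order all_algebra.
From mathcomp Require Import all_classical all_reals all_analysis.
From mathcomp Require Import measurable_realfun.
From mathcomp Require Import ring lra.
Import Order.TTheory GRing.Theory Num.Theory.
Local Open Scope classical_set_scope.
Local Open Scope ring_scope.
Section Geo.
Variables (R : realType) (d : nat).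
Implicit Types (A B Q : dyadic d).

Lemma side_gt0 Q : 0 < side Q :> R.
Proof. by rewrite /side exprz_gt0. Qed.

Lemma side_shift Q (j : nat) :
  (2%:R : R) ^ (Q.1 + j%:Z) = side Q * ((2 ^+ j : int)%:~R).
Proof. by rewrite expfzDr ?pnatr_eq0 // exprnP rmorphXn /= -exprnP. Qed.

Lemma nest A B : A.1 <= B.1 ->
  (exists x, @cube R d A x /\ @cube R d B x) -> @cube R d A `<=` @cube R d B.
Proof.
move=> leAB [x [xA xB]].
have [j hj] : exists j : nat, B.1 = A.1 + j%:Z.
  exists `|B.1 - A.1|%N; rewrite gez0_abs ?subr_ge0 //; ring.
have sB : side B = side A * ((2 ^+ j : int)%:~R) :> R by rewrite /side hj side_shift.
set M : int := 2 ^+ j in sB.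
have s0 := side_gt0 A.
move=> y yA i.
have /andP[x1 x2] := xA i; have /andP[x3 x4] := xB i; have /andP[y1 y2] := yA i.
rewrite sB in x3 x4 *.
set k := A.2 i in x1 x2 y1 y2; set m := B.2 i in x3 x4 *.
have h1 : m * M < k + 1.
  rewrite -(ltr_int R) intrM; rewrite -(ltr_pM2r s0).
  have -> : m%:~R * M%:~R * side A = m%:~R * (side A * M%:~R) :> R by ring.
  exact: le_lt_trans x3 x2.
have h2 : k < (m + 1) * M.
  rewrite -(ltr_int R) intrM; rewrite -(ltr_pM2r s0).
  have -> : (m + 1)%:~R * M%:~R * side A = (m + 1)%:~R * (side A * M%:~R) :> R by ring.
  exact: le_lt_trans x1 x4.
have h1' : m * M <= k by rewrite -ltzD1.
have h2' : k + 1 <= (m + 1) * M by rewrite lezD1.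
rewrite -!(mulrC (M%:~R)) !mulrA -!intrM !(mulrC _ M).
apply/andP; split.
  by apply: (le_trans _ y1); rewrite ler_pM2r // ler_int mulrC.
by apply: (lt_le_trans y2); rewrite ler_pM2r // ler_int mulrC.
Qed.

Definition ptt A (t : R) : d.-tuple R := [tuple ((A.2 i)%:~R + t) * side A | i < d].

Lemma ptt_in A t : 0 <= t < 1 -> @cube R d A (ptt A t).
Proof.
move=> /andP[t0 t1] i; rewrite tnth_mktuple intrD /=.
have s0 := side_gt0 A.
apply/andP; split; first by rewrite ler_pM2r // lerDl.
by rewrite ltr_pM2r // ltrD2l.
Qed.

Lemma side_prt Q : side (prt Q) = side Q * 2 :> R.
Proof. by rewrite /side /= (side_shift Q 1) expr1. Qed.

Lemma sub_prt Q : @cube R d Q `<=` cube (prt Q).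
Proof.
apply: nest; first by rewrite /= lerDl.
exists (ptt Q 0); split; first by apply: ptt_in; rewrite lexx ltr01.
move=> i; rewrite tnth_mktuple addr0 side_prt /prt /= ffunE.
set k := Q.2 i.
have hk := divz_eq k 2.
have r0 : 0 <= (k %% 2)%Z by rewrite modz_ge0.
have r1 : (k %% 2)%Z < 2 by rewrite ltz_pmod.
have s0 := side_gt0 Q.
set m := (k %/ 2)%Z in hk *; set r := (k %% 2)%Z in hk r0 r1.
have hk' : k%:~R = m%:~R * 2 + r%:~R :> R by rewrite {1}hk intrD intrM.
have r0' : 0 <= r%:~R :> R by rewrite ler0z.
have r1' : r%:~R < 2 :> R by rewrite (_ : 2 = 2%:~R) // ltr_int.
rewrite hk' intrD; apply/andP; split; nra.
Qed.

Lemma sub_le A B : (0 < d)%N -> @cube R d A `<=` @cube R d B -> A.1 <= B.1.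
Proof.
move=> d0 sAB; rewrite leNgt; apply/negP => ltBA.
have hB := sAB _ (@ptt_in A 0 _); have hB' := sAB _ (@ptt_in A (3/4) _).
have i := Ordinal d0.
have [j hj] : exists j : nat, A.1 = B.1 + 1 + j%:Z.
  exists (absz (A.1 - (B.1 + 1))%R); rewrite gez0_abs ?subr_ge0 ?lezD1 //; ring.
have sA : side A = side B * 2 * ((2 ^+ j : int)%:~R) :> R.
  rewrite /side hj; have -> : (B.1 + 1 + j%:Z) = (prt B).1 + j%:Z by [].
  by rewrite side_shift side_prt.
have Mge : 1 <= ((2 ^+ j : int)%:~R) :> R.
  by rewrite (_ : 1 = 1%:~R) // ler_int exprn_ege1.
have /andP[a1 a2] := hB (ltac:(rewrite lexx; lra)) i.
have /andP[b1 b2] := hB' (ltac:(lra)) i.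
move: a1 a2 b1 b2; rewrite !tnth_mktuple !addr0 sA.
set M := ((2 ^+ j : int)%:~R : R) in Mge *.
set a := (A.2 i)%:~R; set b := (B.2 i)%:~R.
have s0 := side_gt0 B; set s := side B in s0 *.
move=> a1 a2 b1 b2.
rewrite intrD -/b in a2 b2.
have u2 : s * 2 <= s * 2 * M by rewrite ler_peMr // mulr_ge0 // ltW.
set u := s * 2 * M in a1 b2 u2.
have h : 3/4 * u < s.
  have -> : 3/4 * u = (a + 3/4) * u - a * u by ring.
  have -> : s = (b + 1) * s - b * s by ring.
  lra.
clearbody u s; move: s0 u2 h; clear; lra.
Qed.

Lemma sub_eq A B : (0 < d)%N -> @cube R d A `<=` @cube R d B -> A.1 = B.1 ->
  @cube R d A = @cube R d B.
Proof.
move=> d0 sAB e; apply/seteqP; split => //.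
apply: nest; first by rewrite e.
have hp : @cube R d A (ptt A 0) by apply: ptt_in; lra.
by exists (ptt A 0); split => //; apply: sAB.
Qed.

Lemma strict_lt A B : (0 < d)%N -> @cube R d A `<=` @cube R d B ->
  @cube R d A <> @cube R d B -> A.1 < B.1.
Proof.
move=> d0 sAB nAB; rewrite lt_neqAle sub_le // andbT; apply/eqP => e.
exact/nAB/sub_eq.
Qed.

Lemma trich A B : (0 < d)%N ->
  [\/ @cube R d A = @cube R d B, @cube R d A `&` @cube R d B = set0,
      @cube R d A `<=` @cube R d B /\ @cube R d A <> @cube R d B |
      @cube R d B `<=` @cube R d A /\ @cube R d B <> @cube R d A].
Proof.
move=> d0.
have [[x [xA xB]]|nx] := pselect (exists x, @cube R d A x /\ @cube R d B x); last first.
  apply: Or42; apply/seteqP; split => // x [xA xB]; apply: nx; by exists x.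
have [le|lt] := leP A.1 B.1.
  have sAB := @nest A B le (ex_intro _ x (conj xA xB)).
  have [e|ne] := pselect (@cube R d A = @cube R d B); first exact: Or41.
  by apply: Or43.
have sBA := @nest B A (ltW lt) (ex_intro _ x (conj xB xA)).
have [e|ne] := pselect (@cube R d B = @cube R d A); first by apply: Or41.
by apply: Or44.
Qed.
End Geo.

Section Comb.
Variables (R : realType) (d : nat) (S : set (dyadic d)) (g : dyadic d -> R) (N : int).
Hypothesis d0 : (0 < d)%N.
Hypothesis gpos : forall P, S P -> 0 < g P.
Hypothesis Nb : forall P, S P -> P.1 <= N.

Definition lev (P : dyadic d) : nat := absz (N - P.1).
Definition strictp (P P' : dyadic d) :=
  @cube R d (prt P) `<=` @cube R d (prt P') /\ @cube R d (prt P) <> @cube R d (prt P').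
Definition outr (P P' : dyadic d) := ~ (2%:R ^- d < g P / g P' < 2%:R ^+ d).

Fixpoint selb (k : nat) : set (dyadic d) :=
  match k with
  | 0 => set0
  | k'.+1 => selb k' `|` [set P | S P /\ lev P = k' /\
                 forall P', selb k' P' -> strictp P P' -> outr P P']
  end.

Definition X P := S P /\ forall P', selb (lev P) P' -> strictp P P' -> outr P P'.

Lemma selbP k P : selb k P <-> (lev P < k)%N /\ X P.
Proof.
elim: k P => [|k IH] P /=; first by split => // -[].
split.
  case => [/IH [h1 h2]|[SP [e h]]]; first by split => //; apply: ltnW.
  by split; [rewrite e | split => //; rewrite e].
move=> [lt [SP h]]; move: lt; rewrite ltnS leq_eqVlt => /orP[/eqP e|lt].
  by right; split => //; split => //; rewrite -e.
by left; apply/IH.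
Qed.

Lemma strict_lev P P' : S P -> S P' -> strictp P P' -> (lev P' < lev P)%N.
Proof.
move=> SP SP' [s ne]; have := @strict_lt R d _ _ d0 s ne => /=; rewrite ltrD2r => lt.
have h1 := Nb _ SP; have h2 := Nb _ SP'.
rewrite /lev -ltz_nat !gez0_abs ?subr_ge0 //; by rewrite ltrD2l ltrN2.
Qed.

Lemma outr_sym P P' : S P -> S P' -> outr P P' -> outr P' P.
Proof.
move=> SP SP' h /andP[h1 h2]; apply: h.
have gP := gpos _ SP; have gP' := gpos _ SP'.
have e : g P / g P' = (g P' / g P)^-1 by rewrite invf_div.
have c0 : 0 < (2%:R : R) ^+ d by rewrite exprn_gt0.
have r0 : 0 < g P' / g P by rewrite divr_gt0.
rewrite e; apply/andP; split.
  by rewrite ltf_pV2 ?posrE ?invr_gt0 // invrK.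
by rewrite -[X in _ < X]invrK ltf_pV2 ?posrE ?invr_gt0.
Qed.

Definition Qt := [set P | selb (lev P).+1 P].

Lemma comb :
  Qt `<=` S /\
  (forall Q, S Q -> exists2 P, Qt P &
      @cube R d Q `<=` @cube R d (prt P) /\ g Q <= 2%:R ^+ d * g P) /\
  (forall Q P, Qt Q -> Qt P ->
     [\/ @cube R d (prt Q) = @cube R d (prt P),
         @cube R d (prt Q) `&` @cube R d (prt P) = set0 | outr Q P]).
Proof.
have QtX P : Qt P <-> X P.
  split; first by move=> /selbP [].
  by move=> [SP h]; apply/selbP; split => //; split.
split; first by move=> P /QtX [].
split.
  move=> Q SQ.
  have c1 : 1 <= (2%:R : R) ^+ d by rewrite exprn_ege1 // ler1n.
  have gQ := gpos _ SQ.
  have [XQ|nXQ] := pselect (X Q).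
    exists Q; first exact/QtX.
    by split; [exact: (@sub_prt R d) | rewrite ler_peMl // ltW].
  have [P' [sP' [st nout]]] : exists P', selb (lev Q) P' /\ strictp Q P' /\ ~ outr Q P'.
    apply: contrapT => hn; apply: nXQ; split => // P' h1 h2.
    apply: contrapT => h3; apply: hn; by exists P'.
  have /selbP [_ XP'] := sP'.
  exists P'; first exact/QtX.
  split; first by move=> x /(@sub_prt R d) /(proj1 st).
  have gP' := gpos _ (proj1 XP').
  have /andP[_ h] : 2%:R ^- d < g Q / g P' < 2%:R ^+ d by apply: contrapT.
  by rewrite -ler_pdivrMr // ltW.
move=> Q P /QtX XQ /QtX XP.
have [e|e|st|st] := @trich R d (prt Q) (prt P) d0.
- exact: Or31.
- exact: Or32.
- apply: Or33; apply: (proj2 XQ) => //; apply/selbP; split => //.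
  exact: strict_lev (proj1 XQ) (proj1 XP) st.
- apply: Or33; apply: outr_sym (proj1 XP) (proj1 XQ) _.
  apply: (proj2 XP) => //; apply/selbP; split => //.
  exact: strict_lev (proj1 XP) (proj1 XQ) st.
Qed.
End Comb.

Section Ana.
Variables (R : realType) (d : nat) (mu : {measure set (d.-tuple R) -> \bar R}).
Variables (f : d.-tuple R -> R) (p J : R).
Hypothesis leb : is_lebesgue mu.
Hypothesis mf : measurable_fun setT f.
Hypothesis p1 : 1 <= p.
Hypothesis J0 : 0 <= J.
Hypothesis hI : (\int[mu]_x (`|f x| `^ p)%:E)%E = J%:E.

Lemma cube_box (Q : dyadic d) : @cube R d Q = box (@ptt R d Q 0) (@ptt R d Q 1).
Proof.
apply/seteqP; split => x h i; have := h i; rewrite !tnth_mktuple addr0 //.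
  by rewrite intrD.
by rewrite intrD.
Qed.

Lemma mu_cube (Q : dyadic d) : mu (cube Q) = (side Q ^+ d)%:E.
Proof.
rewrite cube_box leb; last first.
  move=> i; rewrite !tnth_mktuple addr0 ler_pM2r ?(@side_gt0 R d) // lerDl //.
congr EFin; rewrite (eq_bigr (fun=> side Q)) ?prodr_const ?card_ord //.
by move=> i _; rewrite !tnth_mktuple addr0; ring.
Qed.

Lemma cube_meas (Q : dyadic d) : measurable (@cube R d Q).
Proof.
have -> : @cube R d Q = \bigcap_(i in [set: 'I_d])
   ((fun x => tnth x i) @^-1` `[(Q.2 i)%:~R * side Q, ((Q.2 i) + 1)%:~R * side Q[).
  apply/seteqP; split => x h.
    by move=> i _ /=; rewrite in_itv /=; apply: h.
  by move=> i; have := h i I; rewrite /= in_itv.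
apply: fin_bigcap_measurable; first exact: finite_finset.
move=> i _; rewrite -[X in measurable X]setTI.
exact: (@measurable_tnth _ R d i) measurableT _ (measurable_itv _).
Qed.

Lemma ptwise (t y : R) : 0 < t -> `|y| <= t + t `^ (1 - p) * `|y| `^ p.
Proof.
move=> t0; have [le|lt] := leP `|y| t.
  by apply: (le_trans le); rewrite lerDl mulr_ge0 // powR_ge0.
have y0 : 0 < `|y| by apply: lt_trans lt.
rewrite /powR (gt_eqF t0) (gt_eqF y0).
have h : (1 - p) * ln `|y| <= (1 - p) * ln t.
  have : ln t <= ln `|y| by rewrite ler_ln ?posrE // ltW.
  by apply: ler_wnM2l; rewrite ?subr_le0.
have H : `|y| <= expR ((1 - p) * ln t) * expR (p * ln `|y|).
  have e : `|y| = expR ((1 - p) * ln `|y|) * expR (p * ln `|y|).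
    by rewrite -expRD -mulrDl subrK mul1r lnK // posrE.
  by rewrite {1}e ler_pM2r ?expR_gt0 // ler_expR.
lra.
Qed.

Lemma int_bound (Q : dyadic d) (t : R) : 0 < t ->
  (\int[mu]_(x in @cube R d Q) (`|f x|)%:E <=
     (t * side Q ^+ d + t `^ (1 - p) * J)%:E)%E.
Proof.
move=> t0; have mC := cube_meas Q; set C := @cube R d Q in mC *.
have mabs : measurable_fun setT (fun x => `|f x|).
  exact: measurableT_comp (@measurable_realfun.normr_measurable R setT) mf.
have mGT : measurable_fun setT (EFin \o (fun x => `|f x| `^ p)).
  apply/measurable_EFinP; exact: measurableT_comp (measurable_realfun.measurable_powR p) mabs.
have mG : measurable_fun C (EFin \o (fun x => `|f x| `^ p)).
  exact: measurable_funS mGT.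
have mF : measurable_fun C (EFin \o (fun x => `|f x|)).
  apply/measurable_EFinP; exact: measurable_funS mabs.
set c := t `^ (1 - p).
have c0 : 0 <= c by apply: powR_ge0.
have H1 : (\int[mu]_(x in C) (`|f x|)%:E <=
    \int[mu]_(x in C) (t%:E + c%:E * (`|f x| `^ p)%:E))%E.
  apply: ge0_le_integral => //.
  - apply: emeasurable_funD; first exact: measurable_cst.
    by apply: emeasurable_funM => //; exact: measurable_cst.
  - by move=> x _; rewrite -EFinM -EFinD lee_fin ptwise.
apply: (le_trans H1); rewrite ge0_integralD //.
- rewrite integral_cst // ge0_integralZl_EFin // mu_cube EFinD EFinM.
  apply: leeD; first by [].
  rewrite EFinM lee_pmul2l ?lee_fin //.
  rewrite -hI; apply: ge0_subset_integral => //.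
  by rewrite -[0%E]/(0%:E) lte_fin /c powR_gt0.
- by move=> x _; rewrite lee_fin ltW.
- by move=> x _; rewrite mule_ge0 // lee_fin powR_ge0.
- by apply: emeasurable_funM => //; exact: measurable_cst.
Qed.

Lemma avg_bound (Q : dyadic d) (t : R) : 0 < t ->
  avg mu f Q <= t + t `^ (1 - p) * J / side Q ^+ d.
Proof.
move=> t0; rewrite /avg mu_cube /=.
have s0 : 0 < side Q ^+ d :> R by rewrite exprn_gt0 // side_gt0.
have := int_bound Q t t0.
have := @integral_ge0 _ _ R mu (@cube R d Q) (fun x => (`|f x|)%:E) (fun x _ => normr_ge0 _).
move: (\int[mu]_(x in _) _)%E => e.
case: e => [r||] //= e0 eB.
rewrite ler_pdivrMr // mulrDl divfK ?gt_eqF // [t * _]mulrC -lee_fin.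
Qed.

Lemma key (Q : dyadic d) (alpha : R) : (0 < p) ->
  side Q `^ alpha * avg mu f Q <=
  (1 + J) * expR ((alpha - d%:R / p) * ln (side Q)).
Proof.
move=> p0.
have s0 : 0 < side Q :> R by rewrite side_gt0.
set L := ln (side Q).
have sE : side Q = expR L by rewrite lnK.
set t := expR (- (d%:R / p) * L).
have t0 : 0 < t by apply: expR_gt0.
have := avg_bound Q t t0.
have tE : t `^ (1 - p) = expR ((1 - p) * (- (d%:R / p) * L)).
  by rewrite /powR (gt_eqF t0) expRK.
have dE : side Q ^+ d = expR (d%:R * L) by rewrite sE expRM_natl.
rewrite tE dE mulrAC -expRB => h.
have aE : side Q `^ alpha = expR (alpha * L) by rewrite /powR (gt_eqF s0).
rewrite aE.
apply: (le_trans (ler_wpM2l (ltW (expR_gt0 _)) h)).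
have e1 : (1 - p) * (- (d%:R / p) * L) - d%:R * L = - (d%:R / p) * L.
  have pn : p != 0 by rewrite gt_eqF.
  by field.
rewrite e1 -/t.
have -> : (alpha - d%:R / p) * L = alpha * L + (- (d%:R / p) * L) by ring.
by rewrite expRD -/t le_eqVlt; apply/orP; left; apply/eqP; ring.
Qed.

Lemma boundN (alpha eps : R) : 0 < alpha -> p < d%:R / alpha -> 0 < eps ->
  exists N : int, forall P : dyadic d,
    eps < side P `^ alpha * avg mu f P -> P.1 <= N.
Proof.
move=> a0 pa e0.
have p0 : 0 < p by apply: lt_le_trans p1; exact: ltr01.
have bn : alpha - d%:R / p < 0.
  rewrite subr_lt0 ltr_pdivlMr // mulrC -ltr_pdivlMr //.
set b := alpha - d%:R / p in bn.
have J1 : 0 < 1 + J by rewrite ltr_pwDl.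
set K := ln (eps / (1 + J)) / b.
have := @archi_boundP _ (expR K) (ltW (expR_gt0 _)).
set M := Num.Def.archi_bound _ => hM.
exists (Posz M) => P hP; rewrite leNgt; apply/negP => lt.
case: P lt hP => [[m|m] k] //= lt hP.
all: try by move: lt; rewrite ltz_nat.
rewrite ltz_nat in lt.
have hk := @key ((m:int), k) alpha p0.
set s := side ((m:int), k) in hk.
have sE : s = 2%:R ^+ m by rewrite /s /side /= -exprnP.
have sm : (m%:R : R) < s by rewrite sE -natrX ltr_nat ltn_expl.
have KS : K <= ln s.
  rewrite -{1}(expRK K) ler_ln ?posrE ?expR_gt0 //; last by rewrite sE exprn_gt0.
  apply: ltW; apply: (lt_trans hM); apply: le_lt_trans sm; rewrite ler_nat; exact: ltnW.
have h2 : b * ln s <= ln (eps / (1 + J)).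
  have -> : ln (eps / (1 + J)) = b * K by rewrite /K [b * _]mulrC divfK // lt_eqF.
  by apply: ler_wnM2l => //; apply: ltW.
have h3 : expR (b * ln s) <= eps / (1 + J).
  by rewrite -(@lnK _ (eps / (1 + J))) ?posrE ?divr_gt0 // ler_expR.
have : (1 + J) * expR (b * ln s) <= eps.
  by rewrite mulrC -ler_pdivlMr.
move=> h4; have := lt_le_trans hP (le_trans hk h4); by rewrite ltxx.
Qed.
End Ana.

Theorem lemma3p6 (R : realType) (d : nat)
  (mu : {measure set (d.-tuple R) -> \bar R}) (alpha p eps : R)
  (f : d.-tuple R -> R) :
  is_lebesgue mu ->
  0 < alpha -> alpha < d%:R ->
  1 <= p -> p < d%:R / alpha ->
  measurable_fun setT f -> (Lnorm mu p%:E (EFin \o f) < +oo)%E ->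
  0 < eps ->
  exists Qt : set (dyadic d),
    Qt `<=` Qalpha mu f alpha /\
    (forall Q : dyadic d, Qalpha mu f alpha Q ->
       eps < side Q `^ alpha * avg mu f Q ->
       exists2 P : dyadic d, Qt P &
         @cube R d Q `<=` cube (prt P) /\ avg mu f Q <= 2%:R ^+ d * avg mu f P) /\
    (forall Q P : dyadic d, Qt Q -> Qt P ->
       [\/ cube (prt Q) = cube (prt P) :> set (d.-tuple R),
           cube (prt Q) `&` cube (prt P) = set0 :> set (d.-tuple R)
         | ~ (2%:R ^- d < avg mu f Q / avg mu f P < 2%:R ^+ d)]).
Proof.
move=> leb a0 ad p1 pa mf Lf e0.
have d0 : (0 < d)%N.
  rewrite lt0n; apply/negP => /eqP d0; move: ad; rewrite d0 => ad.
  by have := lt_trans a0 ad; rewrite ltxx.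
have p0 : 0 < p by apply: lt_le_trans p1; exact: ltr01.
have [l hl] : exists l : R, Lnorm mu p%:E (EFin \o f) = l%:E.
  have := Lnorm_ge0 mu p%:E (EFin \o f).
  move: Lf; case: (Lnorm _ _ _) => [r||] //; by exists r.
have l0 : 0 <= l by rewrite -lee_fin -hl Lnorm_ge0.
have hI : (\int[mu]_x (`|f x| `^ p)%:E)%E = (l `^ p)%:E.
  rewrite -poweR_EFin -hl poweR_Lnorm ?gt_eqF //.
have [N hN] := @boundN R d mu f p (l `^ p) leb mf p1 (powR_ge0 _ _) hI alpha eps a0 pa e0.
set S := [set Q : dyadic d | Qalpha mu f alpha Q /\ eps < side Q `^ alpha * avg mu f Q].
have gpos : forall P, S P -> 0 < avg mu f P.
  move=> P [_ h]; rewrite ltNge; apply/negP => h0.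
  have : side P `^ alpha * avg mu f P <= 0 by rewrite mulr_ge0_le0 // powR_ge0.
  move=> h1; have := lt_le_trans (lt_trans e0 h) h1; by rewrite ltxx.
have Nb : forall P, S P -> P.1 <= N by move=> P [_ h]; exact: hN.
have [h1 [h2 h3]] := @comb R d S (avg mu f) N d0 gpos Nb.
exists (Qt R d S (avg mu f) N); split; first by move=> P /h1 [].
split; first by move=> Q hQ hQ'; apply: h2.
exact: h3.
Qed.
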